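(* Let $\lambda_2,\lambda_3$ be distinct nonzero complex numbers, $J_1^*=\mathrm{diag}(0,\lambda_2,\lambda_3)$, and $h>0$. Set $$\psi=1,\qquad \phi=\frac{(\lambda_2-\lambda_3)(e^{\lambda_2h}-1)(e^{\lambda_3h}-1)}{\lambda_2\lambda_3(e^{\lambda_2h}-e^{\lambda_3h})},\qquad \theta=\frac{\lambda_3(e^{\lambda_2h}-1)-\lambda_2(e^{\lambda_3h}-1)}{(\lambda_2-\lambda_3)(e^{\lambda_2h}-1)(e^{\lambda_3h}-1)}.$$ Then (whenever these expressions are defined and the scheme is uniquely solvable for $\mathbf{x}_{k+1}$) the difference scheme $$\frac{\mathbf{x}_{k+1}-\psi\mathbf{x}_k}{\phi}=J_1^*\big[\theta\mathbf{x}_{k+1}+(1-\theta)\mathbf{x}_k\big]$$ is exact for the system $\mathbf{x}'=J_1^*\mathbf{x}$.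
   Context: A one-step difference scheme with step size $h>0$ for $\mathbf{x}'=M\mathbf{x}$ is called exact if for every initial vector $\mathbf{x}_0$ the sequence $(\mathbf{x}_k)$ it generates satisfies $\mathbf{x}_k=\mathbf{x}(kh)$ for all $k\ge 0$, where $\mathbf{x}(t)$ solves $\mathbf{x}'=M\mathbf{x}$, $\mathbf{x}(0)=\mathbf{x}_0$. *)

(* Defs.v *)
From mathcomp Require Import all_boot all_order all_algebra.
From mathcomp Require Import all_classical all_reals all_analysis.
From mathcomp.real_closed Require Import complex.
Set Implicit Arguments. Unset Strict Implicit. Unset Printing Implicit Defensive.
Import GRing.Theory Num.Theory.
Local Open Scope ring_scope.

Definition cexp {R : realType} (z : R[i]) : R[i] :=
  Complex (expR (complex.Re z) * cos (complex.Im z))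
          (expR (complex.Re z) * sin (complex.Im z)).

Definition is_solution {R : realType} {n : nat} (M : 'M[R[i]]_n)
    (x : R -> 'cV[R[i]]_n) : Prop :=
  forall (t : R) (i : 'I_n),
    is_derive t 1 (fun s => complex.Re (x s i ord0)) (complex.Re ((M *m x t) i ord0)) /\
    is_derive t 1 (fun s => complex.Im (x s i ord0)) (complex.Im ((M *m x t) i ord0)).

(* A one-step scheme is given by the relation  step x_k x_{k+1}  it imposes. *)
Definition exact_scheme {R : realType} {n : nat} (M : 'M[R[i]]_n) (h : R)
    (step : 'cV[R[i]]_n -> 'cV[R[i]]_n -> Prop) : Prop :=
  forall (x0 : 'cV[R[i]]_n) (xs : nat -> 'cV[R[i]]_n),
    xs 0%N = x0 -> (forall k, step (xs k) (xs k.+1)) ->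
    forall x : R -> 'cV[R[i]]_n, is_solution M x -> x 0 = x0 ->
    forall k : nat, xs k = x (k%:R * h).

Definition J1star {R : realType} (l2 l3 : R[i]) : 'M[R[i]]_3 :=
  diag_mx (\row_(i < 3) [:: 0; l2; l3]`_i).

Definition hC {R : realType} (h : R) : R[i] := Complex h 0.

Definition psi5 {R : realType} : R[i] := 1.

Definition phi5 {R : realType} (l2 l3 : R[i]) (h : R) : R[i] :=
  ((l2 - l3) * (cexp (l2 * hC h) - 1) * (cexp (l3 * hC h) - 1)) /
  (l2 * l3 * (cexp (l2 * hC h) - cexp (l3 * hC h))).

Definition theta5 {R : realType} (l2 l3 : R[i]) (h : R) : R[i] :=
  (l3 * (cexp (l2 * hC h) - 1) - l2 * (cexp (l3 * hC h) - 1)) /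
  ((l2 - l3) * (cexp (l2 * hC h) - 1) * (cexp (l3 * hC h) - 1)).

Definition theta_scheme {R : realType} {n : nat} (M : 'M[R[i]]_n)
    (psi phi theta : R[i]) (xk xk1 : 'cV[R[i]]_n) : Prop :=
  phi^-1 *: (xk1 - psi *: xk) = M *m (theta *: xk1 + (1 - theta) *: xk).

(* Main.v *)
Require Import Defs.
From mathcomp Require Import all_boot all_order all_algebra.
From mathcomp Require Import all_classical all_reals all_analysis.
From mathcomp.real_closed Require Import complex.
From mathcomp Require Import ring lra.
Import GRing.Theory Num.Theory.
Local Open Scope ring_scope.

Section S.
Variable R : realType.
Lemma ode_P (a b : R) (u v : R -> R) :
  (forall t : R, is_derive t (1:R) u (a * u t - b * v t) /\ is_derive t (1:R) v (b * u t + a * v t)) ->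
  forall t, expR (- a * t) * (cos (b * t) * u t + sin (b * t) * v t) = u 0 /\
            expR (- a * t) * (cos (b * t) * v t - sin (b * t) * u t) = v 0.
Proof.
move=> hd t; split.
- have -> : u 0 = expR (- a * 0) * (cos (b * 0) * u 0 + sin (b * 0) * v 0).
    by rewrite !mulr0 expR0 cos0 sin0 mul1r mul0r addr0 mul1r.
  apply: (@is_derive_0_is_cst _ (fun t => expR (- a * t) * (cos (b * t) * u t + sin (b * t) * v t))) => x.
  have [hu hv] := hd x.
  apply: trigger_derive.
  rewrite /GRing.scale /= !mulr1. ring.
- have -> : v 0 = expR (- a * 0) * (cos (b * 0) * v 0 - sin (b * 0) * u 0).
    by rewrite !mulr0 expR0 cos0 sin0 mul1r mul0r subr0 mul1r.
  apply: (@is_derive_0_is_cst _ (fun t => expR (- a * t) * (cos (b * t) * v t - sin (b * t) * u t))) => x.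
  have [hu hv] := hd x.
  apply: trigger_derive.
  rewrite /GRing.scale /= !mulr1. ring.
Qed.

Lemma ode_sol (a b : R) (u v : R -> R) :
  (forall t : R, is_derive t (1:R) u (a * u t - b * v t) /\ is_derive t (1:R) v (b * u t + a * v t)) ->
  forall t, u t = expR (a * t) * (cos (b * t) * u 0 - sin (b * t) * v 0) /\
            v t = expR (a * t) * (sin (b * t) * u 0 + cos (b * t) * v 0).
Proof.
move=> hd t; have [P Q] := ode_P a b u v hd t; rewrite -P -Q.
have he : expR (a * t) * expR (- a * t) = 1 by rewrite -expRD mulNr addrN expR0.
have hc := cos2Dsin2 (b * t).
split.
- rewrite [RHS](_ : _ = (expR (a * t) * expR (- a * t)) * ((cos (b * t) ^+ 2 + sin (b * t) ^+ 2) * u t)); last by ring.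
  by rewrite he hc !mul1r.
- rewrite [RHS](_ : _ = (expR (a * t) * expR (- a * t)) * ((cos (b * t) ^+ 2 + sin (b * t) ^+ 2) * v t)); last by ring.
  by rewrite he hc !mul1r.
Qed.

Lemma ode_shift (a b h : R) (u v : R -> R) :
  (forall t : R, is_derive t (1:R) u (a * u t - b * v t) /\ is_derive t (1:R) v (b * u t + a * v t)) ->
  forall t, u (t + h) = expR (a * h) * (cos (b * h) * u t - sin (b * h) * v t) /\
            v (t + h) = expR (a * h) * (sin (b * h) * u t + cos (b * h) * v t).
Proof.
move=> hd t; have [u1 v1] := ode_sol a b u v hd (t + h); have [ut vt] := ode_sol a b u v hd t.
rewrite u1 v1 ut vt !mulrDr expRD cosD sinD; split; ring.
Qed.

Lemma comp_shift (lam : R[i]) (y : R -> R[i]) (h : R) :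
 (forall t : R, is_derive t (1:R) (fun s => complex.Re (y s)) (complex.Re (lam * y t)) /\
                is_derive t (1:R) (fun s => complex.Im (y s)) (complex.Im (lam * y t))) ->
 forall t, y (t + h) = cexp (lam * hC h) * y t.
Proof.
case: lam => a b hd t.
have eta s : y s = Complex (complex.Re (y s)) (complex.Im (y s)) by case: (y s).
have hd' : forall t : R, is_derive t (1:R) (fun s => complex.Re (y s)) (a * complex.Re (y t) - b * complex.Im (y t)) /\
   is_derive t (1:R) (fun s => complex.Im (y s)) (b * complex.Re (y t) + a * complex.Im (y t)).
  move=> s; have [h1 h2] := hd s; rewrite [y s]eta /= in h1 h2; split.
    exact: h1.
  by move: h2; rewrite addrC.
have [e1 e2] := ode_shift a b h _ _ hd' t.
rewrite [y (t + h)]eta e1 e2 [y t]eta /cexp /hC /=.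
rewrite !mulr0 subr0 add0r /=; congr Complex; ring.
Qed.
End S.

Lemma alg (F : fieldType) (l2 l3 E2 E3 l E : F) : l2 != 0 -> l3 != 0 -> l2 - l3 != 0 -> E2 - E3 != 0 -> E2 - 1 != 0 -> E3 - 1 != 0 ->
 (l = l2 /\ E = E2 \/ l = l3 /\ E = E3) ->
 (((l2 - l3) * (E2 - 1) * (E3 - 1)) / (l2 * l3 * (E2 - E3)))^-1 + (1 - (l3 * (E2 - 1) - l2 * (E3 - 1)) / ((l2 - l3) * (E2 - 1) * (E3 - 1))) * l = E * ((((l2 - l3) * (E2 - 1) * (E3 - 1)) / (l2 * l3 * (E2 - E3)))^-1 - (l3 * (E2 - 1) - l2 * (E3 - 1)) / ((l2 - l3) * (E2 - 1) * (E3 - 1)) * l).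
Proof. move=> ? ? ? ? ? ? [[-> ->]|[-> ->]]; field; by repeat (apply/andP; split). Qed.

Theorem theorem5 (R : realType) (l2 l3 : R[i]) (h : R) :
  l2 != 0 -> l3 != 0 -> l2 != l3 -> 0 < h ->
  (* the expressions for phi and theta are defined *)
  l2 * l3 * (cexp (l2 * hC h) - cexp (l3 * hC h)) != 0 ->
  (l2 - l3) * (cexp (l2 * hC h) - 1) * (cexp (l3 * hC h) - 1) != 0 ->
  (* the scheme (which divides by phi) is defined *)
  phi5 l2 l3 h != 0 ->
  (* the scheme is uniquely solvable for x_{k+1} *)
  ((phi5 l2 l3 h)^-1%:M - theta5 l2 l3 h *: J1star l2 l3) \in unitmx ->
  exact_scheme (J1star l2 l3) h
    (theta_scheme (J1star l2 l3) psi5 (phi5 l2 l3 h) (theta5 l2 l3 h)).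
Proof.
move=> nz2 nz3 n23 hpos hd1 hd2 hphi hunit x0 xs xs0 hstep x hsol hx0.
set lam := fun i : 'I_3 => [:: 0; l2; l3]`_i.
have Jx : forall (v : 'cV[R[i]]_3) i, (J1star l2 l3 *m v) i ord0 = lam i * v i ord0.
  by move=> v i; rewrite /J1star mul_diag_mx !mxE.
have shift : forall i t, x (t + h) i ord0 = cexp (lam i * hC h) * x t i ord0.
  move=> i t; apply: (@comp_shift R (lam i) (fun s => x s i ord0) h) => s.
  rewrite -Jx; exact: hsol.
have nzd : forall i, (phi5 l2 l3 h)^-1 - theta5 l2 l3 h * lam i != 0.
  move: hunit; rewrite unitmxE unitfE.
  have -> : (phi5 l2 l3 h)^-1%:M - theta5 l2 l3 h *: J1star l2 l3
      = diag_mx (\row_i ((phi5 l2 l3 h)^-1 - theta5 l2 l3 h * lam i)).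
    apply/matrixP => i j; rewrite !mxE.
    by case: (eqVneq i j) => [->|_] /=; rewrite ?mulr0n ?mulr1n ?mulr0 ?subr0.
  rewrite det_diag !big_ord_recr big_ord0 /= !mxE mul1r.
  rewrite !mulf_eq0 !negb_or => /andP [/andP [a b] c] i.
  by case: i => [[|[|[|//]]] ?].
have [n2 n3 n23'] : [/\ l2 != 0, l3 != 0 & cexp (l2 * hC h) - cexp (l3 * hC h) != 0].
  by move: hd1; rewrite !mulf_eq0 !negb_or => /andP [/andP [-> ->] ->].
have [d23 e2 e3] : [/\ l2 - l3 != 0, cexp (l2 * hC h) - 1 != 0 & cexp (l3 * hC h) - 1 != 0].
  by move: hd2; rewrite !mulf_eq0 !negb_or => /andP [/andP [-> ->] ->].
have c0 : cexp (0 * hC h) = 1 :> R[i].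
  by rewrite mul0r /cexp /= expR0 cos0 sin0 mulr1 mulr0.
have key : forall i, (phi5 l2 l3 h)^-1 + (1 - theta5 l2 l3 h) * lam i
    = cexp (lam i * hC h) * ((phi5 l2 l3 h)^-1 - theta5 l2 l3 h * lam i).
  case=> [[|[|[|//]]] ?] /=.
  - by rewrite c0 !mulr0 subr0 addr0 mul1r.
  - rewrite /phi5 /theta5; apply: alg => //; by left.
  - rewrite /phi5 /theta5; apply: alg => //; by right.
have step : forall k i, xs k.+1 i ord0 = cexp (lam i * hC h) * xs k i ord0.
  move=> k i; have := hstep k; rewrite /theta_scheme => /matrixP/(_ i ord0).
  rewrite Jx !mxE /psi5 mul1r => e.
  apply: (mulfI (nzd i)); rewrite mulrA [_ * cexp _]mulrC -key.
  apply/eqP; rewrite -subr_eq0.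
  set y1 := xs k.+1 i ord0; set y0 := xs k i ord0.
  move: e; set p := (phi5 l2 l3 h)^-1; set t := theta5 l2 l3 h => e.
  have -> : (p - t * lam i) * y1 - (p + (1 - t) * lam i) * y0
     = p * (y1 - y0) - lam i * (t * y1 + (1 - t) * y0) by ring.
  by rewrite e subrr.
elim=> [|k IH]; first by rewrite mul0r xs0 hx0.
have -> : (k.+1)%:R * h = k%:R * h + h by rewrite -addn1 natrD mulrDl mul1r.
apply/matrixP => i j; rewrite (ord1 j) step IH shift //.
Qed.
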